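(* Let $N=[n(i,j)]$ be an $r\times r$ indecomposable generalised Cartan matrix. There exists an $r\times r$ matrix $A'$ such that (a) $A'_{ii}=1$ for $1\le i\le r$; (b) $A'_{ij}\in\{0,-1\}$ for $i\ne j$; (c) $A'_{ij}+A'_{ji}=n(j,i)$ for all $i,j$; (d) if $A'_{ij}=-1$, then the $i$-th row and the $j$-th column of $A'$ have no other entries equal to $-1$, if and only if $N$ is the generalised Cartan matrix of type $A_r$ ($r\ge1$) or of type $A^{(1)}_{r-1}$ ($r\ge 2$). For $A_1$ or $A^{(1)}_1$ there is exactly one matrix satisfying (a)–(d), and for $A_r$ ($r\ge2$) or $A^{(1)}_{r-1}$ ($r\ge3$) there are exactly two.
   Context: A generalised Cartan matrix is $N=[n(i,j)]_{1\le i,j\le r}$ with $n(i,j)\in\mathbb Z$, $n(i,i)=2$, $n(i,j)\le 0$ for $i\neq j$, and $n(i,j)=0\iff n(j,i)=0$; it is indecomposable if there is no partition of $\{1,\dots,r\}$ into two nonempty sets $I,J$ with $n(i,j)=0$ for all $i\in I,j\in J$. The generalised Cartan matrix of type $A_r$ ($r\ge1$) is the $r\times r$ matrix with $2$ on the diagonal, $-1$ in positions $(i,i\pm1)$ and $0$ elsewhere; that of type $A^{(1)}_1$ is $\begin{pmatrix}2&-2\\-2&2\end{pmatrix}$; that of type $A^{(1)}_{r-1}$ ($r\ge3$) is the $r\times r$ matrix with $2$ on the diagonal, $-1$ in positions $(i,i\pm1)$ and $(1,r),(r,1)$, and $0$ elsewhere. ''$N$ is the generalised Cartan matrix of type X''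 means $N$ equals it up to a simultaneous permutation of rows and columns. *)

(* Defs.v *)
From HB Require Import structures.
From mathcomp Require Import all_boot all_order all_algebra all_fingroup.
Set Implicit Arguments. Unset Strict Implicit. Unset Printing Implicit Defensive.
Import Order.TTheory GRing.Theory Num.Theory.
Local Open Scope ring_scope.

Definition is_gcm (r : nat) (N : 'M[int]_r) : Prop :=
  [/\ (forall i, N i i = 2),
      (forall i j, i != j -> N i j <= 0) &
      (forall i j, N i j = 0 <-> N j i = 0)].

Definition indecomposable (r : nat) (N : 'M[int]_r) : Prop :=
  ~ (exists I : {set 'I_r},
        [/\ I != set0, ~: I != set0 &
            forall i j, i \in I -> j \in ~: I -> N i j = 0]).

Definition cartanA (r : nat) : 'M[int]_r :=
  \matrix_(i < r, j < r)
    if i == j then 2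
    else if ((i.+1 == j :> nat) || (j.+1 == i :> nat)) then -1 else 0.

Definition cartanAaff (r : nat) : 'M[int]_r :=
  \matrix_(i < r, j < r)
    if i == j then 2
    else if r == 2%N then -2
    else if [|| (i.+1 == j :> nat), (j.+1 == i :> nat),
                ((i == 0 :> nat) && (j == r.-1 :> nat)) |
                ((j == 0 :> nat) && (i == r.-1 :> nat))] then -1 else 0.

Definition perm_equiv (r : nat) (N M : 'M[int]_r) : Prop :=
  exists s : 'S_r, forall i j, N i j = M (s i) (s j).

Definition is_type_A (r : nat) (N : 'M[int]_r) : Prop :=
  (1 <= r)%N /\ perm_equiv N (cartanA r).

Definition is_type_Aaff (r : nat) (N : 'M[int]_r) : Prop :=
  (2 <= r)%N /\ perm_equiv N (cartanAaff r).

Definition good_Aprime (r : nat) (N A : 'M[int]_r) : Prop :=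
  [/\ (forall i, A i i = 1),
      (forall i j, i != j -> A i j = 0 \/ A i j = -1),
      (forall i j, A i j + A j i = N j i) &
      (forall i j, A i j = -1 ->
         (forall k, k != j -> A i k != -1) /\
         (forall k, k != i -> A k j != -1))].

(* Main.v *)
Require Import Defs.
From HB Require Import structures.
From mathcomp Require Import all_boot all_order all_algebra all_fingroup.
From mathcomp Require Import zify.
Set Implicit Arguments. Unset Strict Implicit. Unset Printing Implicit Defensive.
Import Order.TTheory GRing.Theory Num.Theory.
Local Open Scope ring_scope.

Definition ev (b : bool) : int := if b then -1 else 0.
Definition ee (cyc : bool) (p a b : nat) : bool :=
  (a.+1 == b)%N || [&& cyc, (a.+1 == p)%N & (b == 0)%N].
Definition Ce (cyc : bool) (p : nat) : 'M[int]_p :=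
  \matrix_(a < p, b < p) if a == b then 2 else ev (ee cyc p a b) + ev (ee cyc p b a).
Definition A1 (cyc : bool) (p : nat) : 'M[int]_p :=
  \matrix_(a < p, b < p) if a == b then 1 else ev (ee cyc p a b).


Lemma good_off r (N A : 'M[int]_r) i j : good_Aprime N A -> i != j -> A i j = 0 \/ A i j = -1.
Proof. by case=> _ H _ _; apply: H. Qed.

Lemma good_diag r (N A : 'M[int]_r) i : good_Aprime N A -> A i i = 1.
Proof. by case=> H _ _ _; apply: H. Qed.

Lemma good_sum r (N A : 'M[int]_r) i j : good_Aprime N A -> A i j + A j i = N j i.
Proof. by case=> _ _ H _; apply: H. Qed.

Lemma good_neq r (N A : 'M[int]_r) i j : good_Aprime N A -> A i j = -1 -> i != j.
Proof. move=> G H; apply/eqP=> E; move: H; rewrite E (good_diag _ G) => /eqP; by []. Qed.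

Lemma good_row r (N A : 'M[int]_r) i j k : good_Aprime N A -> A i j = -1 -> A i k = -1 -> j = k.
Proof.
case=> _ _ _ H Hj Hk; case: (H _ _ Hj) => H1 _.
by apply/eqP; apply/negP => /negP nk; have := H1 k; rewrite eq_sym nk Hk eqxx => /(_ isT).
Qed.

Lemma good_col r (N A : 'M[int]_r) i j k : good_Aprime N A -> A i j = -1 -> A k j = -1 -> i = k.
Proof.
case=> _ _ _ H Hj Hk; case: (H _ _ Hj) => _ H1.
by apply/eqP; apply/negP => /negP nk; have := H1 k; rewrite eq_sym nk Hk eqxx => /(_ isT).
Qed.

Lemma good_ev r (N A : 'M[int]_r) i j : good_Aprime N A -> i != j -> A i j = ev (A i j == -1).
Proof. by move=> G /(good_off G) [] ->. Qed.

Lemma CeA p (a b : 'I_p) : Ce false p a b = cartanA p a b.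
Proof.
rewrite !mxE; case: eqP => // /eqP ab; rewrite /ee /ev /= !orbF.
case: (a.+1 =P b) => H1; case: (b.+1 =P a) => H2 //=; lia.
Qed.

Lemma CeAaff p (a b : 'I_p) : (1 < p)%N -> Ce true p a b = cartanAaff p a b.
Proof.
move=> p1; rewrite !mxE -val_eqE; case: a b => [a ha] [b hb] /=.
case: eqP => // /eqP ab; rewrite /ee /ev /=.
case: (p =P 2%N) => [p2|p2].
  subst p; case: (a.+1 =P b) => H1; case: (b.+1 =P a) => H2; case: (a.+1 =P 2%N) => H3;
  case: (b.+1 =P 2%N) => H4; case: (a =P 0%N) => H5; case: (b =P 0%N) => H6 /=; lia.
case: (a.+1 =P b) => H1; case: (b.+1 =P a) => H2; case: (a.+1 =P p) => H3;
  case: (b.+1 =P p) => H4; case: (a =P 0%N) => H5; case: (b =P 0%N) => H6;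
  case: (a =P p.-1) => H7; case: (b =P p.-1) => H8 /=; lia.
Qed.
Lemma ee_irr (cyc : bool) p a : (cyc -> 1 < p)%N -> (a < p)%N -> ~~ ee cyc p a a.
Proof. rewrite /ee; case: cyc => /= H ha; [have := H isT|]; lia. Qed.

Lemma ee_fun cyc p a b c : (b < p)%N -> (c < p)%N -> ee cyc p a b -> ee cyc p a c -> b = c.
Proof. rewrite /ee; case: cyc => /= hb hc; lia. Qed.

Lemma ee_inj cyc p a b c : (a < p)%N -> (b < p)%N -> ee cyc p a c -> ee cyc p b c -> a = b.
Proof. rewrite /ee; case: cyc => /= hb hc; lia. Qed.

Lemma Ce_sym cyc p (a b : 'I_p) : Ce cyc p a b = Ce cyc p b a.
Proof. by rewrite !mxE eq_sym; case: eqP => // _; rewrite addrC. Qed.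

Lemma good_A1 (cyc : bool) p : (cyc -> 1 < p)%N -> good_Aprime (Ce cyc p) (A1 cyc p).
Proof.
move=> cp; split.
- by move=> i; rewrite mxE eqxx.
- by move=> i j /negPf ij; rewrite mxE ij /ev; case: ifP; auto.
- move=> i j; rewrite !mxE eq_sym; case: eqP => // _; by rewrite addrC.
- move=> i j; rewrite mxE; case: eqP => // /eqP ij; rewrite /ev; case: ifP => // eij _.
  split=> k nk; rewrite mxE.
  + case: (i == k); first by [].
    rewrite /ev; case: ifP => [eik|//]; exfalso.
    move/negP: nk; apply; apply/eqP; apply: val_inj; exact: (esym (ee_fun (ltn_ord j) (ltn_ord k) eij eik)).
  + case: (k == j); first by [].
    rewrite /ev; case: ifP => [eik|//]; exfalso.
    move/negP: nk; apply; apply/eqP; apply: val_inj; exact: (ee_inj (ltn_ord k) (ltn_ord i) eik eij).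
Qed.

Lemma good_tr p (C B : 'M[int]_p) : (forall i j, C i j = C j i) ->
  good_Aprime C B -> good_Aprime C B^T.
Proof.
move=> Cs [H1 H2 H3 H4]; split.
- by move=> i; rewrite mxE.
- by move=> i j ij; rewrite mxE; apply: H2; rewrite eq_sym.
- by move=> i j; rewrite !mxE addrC H3 Cs.
- move=> i j; rewrite mxE => /H4 [K1 K2]; split=> k nk; rewrite mxE; [exact: K2|exact: K1].
Qed.

Lemma good_Ce_sum cyc p (B : 'M[int]_p) (a b : 'I_p) : good_Aprime (Ce cyc p) B ->
  a != b -> B a b + B b a = ev (ee cyc p a b) + ev (ee cyc p b a).
Proof.
move=> G ab; rewrite (good_sum a b G) mxE eq_sym (negPf ab) addrC //.
Qed.

Lemma fromEdges cyc p (B : 'M[int]_p) : good_Aprime (Ce cyc p) B ->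
  (forall a b : 'I_p, ee cyc p a b -> B a b = -1) -> B = A1 cyc p.
Proof.
move=> G E; apply/matrixP => a b; rewrite mxE.
case: eqP => [->|/eqP ab]; first exact: (good_diag _ G).
have S := good_Ce_sum G ab; have O1 := good_off G ab.
have O2 := good_off G (ltac:(by rewrite eq_sym) : b != a).
case eab: (ee cyc p a b); first by rewrite (E _ _ eab).
move: S; rewrite /ev eab; case eba: (ee cyc p b a); first by rewrite (E _ _ eba); lia.
lia.
Qed.

Lemma chain p (C B : 'M[int]_p) x y z : good_Aprime C B -> x != z -> y != z ->
  B x y + B y x = -1 -> B y z + B z y = -1 -> B x y = -1 -> B y z = -1.
Proof.
move=> G xz yz S1 S2 H; case: (good_off G yz) => // H0.
have H1 : B z y = -1 by move: S2; rewrite H0; lia.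
by move: xz; rewrite (good_col G H H1) eqxx.
Qed.

Lemma inord_neq n (a b : nat) : (a <= n)%N -> (b <= n)%N -> a != b ->
  (inord a : 'I_n.+1) != inord b.
Proof. by move=> ha hb ab; rewrite -val_eqE /= !inordK. Qed.

Lemma edges (cyc : bool) n (B : 'M[int]_n.+1) : (cyc -> 0 < n)%N ->
  good_Aprime (Ce cyc n.+1) B ->
  ((0 < n)%N -> B (inord 0) (inord 1) = -1) ->
  forall a b : 'I_n.+1, ee cyc n.+1 a b -> B a b = -1.
Proof.
move=> cn G H0.
have S : forall a b : nat, (a <= n)%N -> (b <= n)%N -> a != b ->
    B (inord a) (inord b) + B (inord b) (inord a) =
    ev (ee cyc n.+1 a b) + ev (ee cyc n.+1 b a).
  by move=> a b ha hb ab; rewrite (good_Ce_sum G (inord_neq ha hb ab)) !inordK.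
have P : forall k, (k < n)%N -> B (inord k) (inord k.+1) = -1.
  elim=> [|k IH] hk; first exact: H0.
  apply: (chain (x := inord k)) G _ _ _ _ (IH (ltnW hk)).
  - apply: inord_neq; lia.
  - apply: inord_neq; lia.
  - rewrite S; try lia.
    have -> : ee cyc n.+1 k k.+1 = true by rewrite /ee; lia.
    have -> : ee cyc n.+1 k.+1 k = false by rewrite /ee; lia.
    by [].
  - rewrite S; try lia.
    have -> : ee cyc n.+1 k.+1 k.+2 = true by rewrite /ee; lia.
    have -> : ee cyc n.+1 k.+2 k.+1 = false by rewrite /ee; lia.
    by [].
move=> a b; rewrite {1}/ee => /orP [/eqP ab| /and3P [c /eqP an /eqP b0]].
  have ha : (a < n)%N by have := ltn_ord b; lia.
  have := P _ ha; rewrite inord_val.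
  by have -> : (inord a.+1 : 'I_n.+1) = b by apply: val_inj; rewrite /= inordK // ab.
have ea : a = inord n by apply: val_inj; rewrite /= inordK //; lia.
have eb : b = inord 0 by apply: val_inj; rewrite /= inordK //; lia.
rewrite ea eb.
case: (n =P 1%N) => [n1|n1].
  have n0 : n != 0%N by lia.
  have := S n 0%N (leqnn n) (leq0n n) n0.
  have -> : ee cyc n.+1 n 0 = true by rewrite /ee c; lia.
  have -> : ee cyc n.+1 0 n = true by rewrite /ee; lia.
  have := good_off G (inord_neq (leqnn n) (leq0n n) n0).
  have := good_off G (inord_neq (leq0n n) (leqnn n) (ltac:(by rewrite eq_sym) : 0%N != n)).
  rewrite /ev; lia.
have n2 : (1 < n)%N by have := cn c; lia.
have Pn : B (inord n.-1) (inord n) = -1.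
  by have := P n.-1 (ltac:(lia)); rewrite prednK //; lia.
apply: (chain (x := inord n.-1)) G _ _ _ _ Pn.
- apply: inord_neq; lia.
- apply: inord_neq; lia.
- rewrite S; try lia.
  have -> : ee cyc n.+1 n.-1 n = true by rewrite /ee; lia.
  have -> : ee cyc n.+1 n n.-1 = false by rewrite /ee; lia.
  by [].
- rewrite S; try lia.
  have -> : ee cyc n.+1 n 0 = true by rewrite /ee c; lia.
  have -> : ee cyc n.+1 0 n = false by rewrite /ee; lia.
  by [].
Qed.

Lemma canon_uniq (cyc : bool) n (B : 'M[int]_n.+1) : (cyc -> 0 < n)%N ->
  good_Aprime (Ce cyc n.+1) B -> B = A1 cyc n.+1 \/ B = (A1 cyc n.+1)^T.
Proof.
move=> cn G.
have cn' : (cyc -> 1 < n.+1)%N by move=> /cn.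
case: (posnP n) => [n0|npos].
  left; apply: (fromEdges G); apply: (edges cn G) => h; lia.
have n01 : (inord 0 : 'I_n.+1) != inord 1 by apply: inord_neq; lia.
have S := good_Ce_sum G n01; rewrite !inordK // in S; try lia.
have e01 : ee cyc n.+1 0 1 = true by rewrite /ee.
case: (good_off G n01) => H.
  right; have GT := good_tr (@Ce_sym cyc n.+1) G.
  suff E : B^T = A1 cyc n.+1 by rewrite -(trmxK B) E.
  apply: (fromEdges GT); apply: (edges cn GT) => _; rewrite mxE.
  have := good_off G (ltac:(by rewrite eq_sym) : (inord 1 : 'I_n.+1) != inord 0).
  move: S; rewrite e01 H /ev; case: (ee cyc n.+1 1 0); lia.
left; apply: (fromEdges G); exact: (edges cn G).
Qed.

Lemma A1_neq (cyc : bool) n : (0 < n)%N -> ~~ (cyc && (n == 1%N)) ->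
  A1 cyc n.+1 != (A1 cyc n.+1)^T.
Proof.
move=> npos c; apply/eqP => /matrixP /(_ (inord 0) (inord 1)); rewrite !mxE.
rewrite -!val_eqE /= !inordK; try lia.
have -> : ee cyc n.+1 0 1 = true by rewrite /ee.
have -> : ee cyc n.+1 1 0 = false by move: c; rewrite /ee; case: cyc => /=; lia.
by [].
Qed.

Lemma A1_eq (cyc : bool) n : (n = 0%N \/ (cyc /\ n = 1%N)) ->
  A1 cyc n.+1 = (A1 cyc n.+1)^T.
Proof.
move=> H; apply/matrixP => a b; rewrite !mxE eq_sym; case: eqP => // /eqP ab.
case: H => [n0|[c n1]].
  by move: ab; subst n; rewrite (ord1 a) (ord1 b) eqxx.
have ha := ltn_ord a; have hb := ltn_ord b; have ab2 : (nat_of_ord b != nat_of_ord a) := ab.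
have -> : ee cyc n.+1 a b = true by rewrite /ee c; lia.
have -> : ee cyc n.+1 b a = true by rewrite /ee c; lia.
by [].
Qed.

Definition conj p (s : 'S_p) (M : 'M[int]_p) : 'M[int]_p := \matrix_(i, j) M (s i) (s j).

Lemma conjK p (s : 'S_p) M : conj s^-1 (conj s M) = M.
Proof. by apply/matrixP => i j; rewrite !mxE !permKV. Qed.

Lemma conjKV p (s : 'S_p) M : conj s (conj s^-1 M) = M.
Proof. by apply/matrixP => i j; rewrite !mxE !permK. Qed.

Lemma conj_inj p (s : 'S_p) : injective (conj s).
Proof. by move=> M1 M2 E; rewrite -(conjK s M1) E conjK. Qed.

Lemma good_conj p (s : 'S_p) C B : good_Aprime C B -> good_Aprime (conj s C) (conj s B).
Proof.
move=> [H1 H2 H3 H4]; split.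
- by move=> i; rewrite mxE.
- by move=> i j ij; rewrite mxE; apply: H2; rewrite (inj_eq perm_inj).
- by move=> i j; rewrite !mxE H3.
- move=> i j; rewrite mxE => /H4 [K1 K2]; split=> k nk; rewrite mxE.
  + by apply: K1; rewrite (inj_eq perm_inj).
  + by apply: K2; rewrite (inj_eq perm_inj).
Qed.

Lemma forward_core n (N A : 'M[int]_n.+1) (g : 'I_n.+1 -> 'I_n.+1) (v0 : 'I_n.+1)
  (cyc : bool) : good_Aprime N A -> indecomposable N ->
  (forall i j, A i j = -1 -> g i = j) -> (forall i, g i != i -> A i (g i) = -1) ->
  (forall x y, A x y = -1 -> fconnect g v0 y -> fconnect g v0 x) ->
  (cyc -> forall x, exists y, A x y = -1) ->
  (~~ cyc -> forall k, A k v0 != -1) ->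
  exists w : 'I_n.+1 -> 'I_n.+1, [/\ injective w, (cyc -> 0 < n)%N &
     forall a b, (A (w a) (w b) == -1) = ee cyc n.+1 a b].
Proof.
move=> G Hind gP gE Hcl Hc Hnc.
have all : forall y, fconnect g v0 y.
  move=> y; apply/idPn => Hy; apply: Hind; exists [set y | fconnect g v0 y]; split.
  - by apply/set0Pn; exists v0; rewrite inE connect0.
  - by apply/set0Pn; exists y; rewrite !inE Hy.
  - move=> i j; rewrite !inE => Hi Hj.
    have ij : i != j by apply: contraNneq Hj => <-.
    have ji : j != i by rewrite eq_sym.
    rewrite -(good_sum j i G).
    case: (good_off G ij) => Hij; last first.
      by move: Hj; rewrite -(gP _ _ Hij) (connect_trans Hi (fconnect1 g i)).
    case: (good_off G ji) => Hji; last by move: Hj; rewrite (Hcl _ _ Hji Hi).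
    by rewrite Hij Hji.
have ord : fingraph.order g v0 = n.+1.
  by rewrite /fingraph.order (eq_cardT (A := fconnect g v0)) // -cardT card_ord.
pose w (a : 'I_n.+1) := iter a g v0.
have fi : forall a : 'I_n.+1, findex g v0 (w a) = a.
  by move=> a; apply: findex_iter; rewrite ord.
have winj : injective w by move=> a b E; apply: val_inj; rewrite /= -(fi a) -(fi b) E.
have wsurj : forall y, exists b, w b = y.
  move=> y; have := findex_max (all y); rewrite ord => hb.
  by exists (Ordinal hb); exact: iter_findex (all y).
have wS : forall a b : 'I_n.+1, a.+1 = b -> A (w a) (w b) = -1.
  move=> a b H; have E : w b = g (w a) by rewrite /w -H iterS.
  rewrite E; apply: gE; rewrite -E; apply/eqP => /winj E2.
  by move: H; rewrite E2; lia.
exists w; split => //.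
  move=> c; case: (posnP n) => // n0; case: (Hc c v0) => y Hy.
  have yv : y = v0 by apply: ord_inj; have := ltn_ord y; have := ltn_ord v0; lia.
  by move: Hy; rewrite yv (good_diag _ G).
move=> a b.
case ha: (a.+1 < n.+1)%N.
  have -> : ee cyc n.+1 a b = (a.+1 == b) by rewrite /ee; lia.
  apply/eqP/eqP => [H|H]; last exact: wS.
  have := wS a (Ordinal ha) erefl => H2.
  by have := good_row G H2 H => /winj <-.
have an : (a : nat) = n by have := ltn_ord a; lia.
have -> : ee cyc n.+1 a b = cyc && (b == 0%N :> nat) by have := ltn_ord b; rewrite /ee; lia.
have K : forall b : 'I_n.+1, A (w a) (w b) = -1 -> (b : nat) = 0%N.
  move=> c Hc1; case E: (c : nat) => [//|c'].
  have hc' : (c' < n.+1)%N by have := ltn_ord c; lia.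
  have := wS (Ordinal hc') c (esym E) => H2.
  have := good_col G H2 Hc1 => /winj /(congr1 val) /= E3.
  by have := ltn_ord c; lia.
case E: (A (w a) (w b) == -1).
  have b0 := K b (eqP E); rewrite b0 eqxx andbT.
  case: cyc Hc Hnc => // _ /(_ isT (w a)).
  have -> : v0 = w b by rewrite (_ : b = ord0) //; apply: ord_inj.
  by rewrite E.
case: cyc Hc Hnc => //= Hc _; apply/esym/negbTE/eqP => b0.
case: (Hc isT (w a)) => y Hy; case: (wsurj y) => b' Hb'.
move: Hy; rewrite -Hb' => Hy; have := K _ Hy => b'0.
have : b' = b by apply: val_inj; rewrite /= b0 b'0.
by move=> bb; move: E; rewrite -bb Hy eqxx.
Qed.

Lemma forward n (N A : 'M[int]_n.+1) : good_Aprime N A -> indecomposable N ->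
  exists (cyc : bool) (w : 'I_n.+1 -> 'I_n.+1), [/\ injective w, (cyc -> 0 < n)%N &
     forall a b, (A (w a) (w b) == -1) = ee cyc n.+1 a b].
Proof.
move=> G Hind.
pose g i := if [pick j | A i j == -1] is Some j then j else i.
have gP : forall i j, A i j = -1 -> g i = j.
  move=> i j H; rewrite /g; case: pickP => [k /eqP Hk|Hn]; first exact: good_row G Hk H.
  by have := Hn j; rewrite H eqxx.
have gE : forall i, g i != i -> A i (g i) = -1.
  by move=> i; rewrite /g; case: pickP => [k /eqP //|_]; rewrite eqxx.
case: (pickP (fun v => [forall k, A k v != -1])) => [v0 Hv0|Hall].
  exists false; apply: (forward_core (v0 := v0) G Hind gP gE) => //; last first.
    by move=> _ k; move/forallP: Hv0; apply.
  move=> x y Hxy Hy.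
  have hk := findex_max Hy; have ey := iter_findex Hy.
  move: hk ey; case E: (findex g v0 y) => [|k] hk ey.
    move: Hxy; rewrite -ey /= => Hxy.
    by move/forallP: Hv0 => /(_ x); rewrite Hxy eqxx.
  have hk' : (k < fingraph.order g v0)%N by lia.
  have gx : g (iter k g v0) = y by rewrite -ey iterS.
  have nx : g (iter k g v0) != iter k g v0.
    apply/eqP => E2; have := findex_iter hk'; rewrite -{1}E2 gx E; lia.
  have := gE _ nx; rewrite gx => H2.
  by rewrite -(good_col G H2 Hxy) fconnect_iter.
have hin : forall v, exists k, A k v = -1.
  by move=> v; move/negbT/forallPn: (Hall v) => [k /negPn /eqP]; exists k.
pose h v := odflt v [pick k | A k v == -1].
have hP : forall v, A (h v) v = -1.
  move=> v; rewrite /h; case: pickP => [k /eqP //|Hn].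
  by case: (hin v) => k Hk; have := Hn k; rewrite Hk eqxx.
have hinj : injective h by move=> u v E; apply: (good_row G (hP u)); rewrite E hP.
case: (injF_bij hinj) => hi hK1 hK2.
have hout : forall x, exists y, A x y = -1 by move=> x; exists (hi x); rewrite -{1}(hK2 x) hP.
have ginj : injective g.
  move=> x y E; case: (hout x) => x' Hx; case: (hout y) => y' Hy.
  have Ex := gP _ _ Hx; have Ey := gP _ _ Hy.
  by apply: (good_col G Hx); rewrite -Ex E Ey.
exists true; apply: (forward_core (v0 := ord0) G Hind gP gE) => // x y Hxy Hy.
apply: connect_trans Hy _; rewrite fconnect_sym //; rewrite -(gP _ _ Hxy).
exact: fconnect1.
Qed.

Lemma forward_type n (N A : 'M[int]_n.+1) : good_Aprime N A -> indecomposable N ->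
  is_type_A N \/ is_type_Aaff N.
Proof.
move=> G Hind; case: (forward G Hind) => cyc [w [winj cn Hw]].
have NC : forall a b, N (w a) (w b) = Ce cyc n.+1 a b.
  move=> a b; rewrite mxE; case: eqP => [->|/eqP ab].
    by rewrite -(good_sum (w b) (w b) G) (good_diag _ G).
  have wab : w a != w b by rewrite (inj_eq winj).
  have wba : w b != w a by rewrite eq_sym.
  by rewrite -(good_sum (w b) (w a) G) (good_ev G wab) (good_ev G wba) !Hw addrC.
pose s := ((perm winj)^-1)%g.
have Ns : forall i j, N i j = Ce cyc n.+1 (s i) (s j).
  by move=> i j; rewrite -NC -!(permE winj) !permKV.
case: cyc cn Hw NC Ns => cn Hw NC Ns.
  right; split; first by have := cn isT; lia.
  by exists s => i j; rewrite Ns CeAaff //; have := cn isT; lia.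
by left; split => //; exists s => i j; rewrite Ns CeA.
Qed.

Lemma canon_conj (cyc : bool) n (N : 'M[int]_n.+1) (s : 'S_n.+1) :
  (cyc -> 0 < n)%N -> N = conj s (Ce cyc n.+1) ->
  [/\ good_Aprime N (conj s (A1 cyc n.+1)), good_Aprime N (conj s (A1 cyc n.+1)^T) &
      forall B, good_Aprime N B -> B = conj s (A1 cyc n.+1) \/ B = conj s (A1 cyc n.+1)^T].
Proof.
move=> cn ->; have cn' : (cyc -> 1 < n.+1)%N by move=> /cn.
split.
- by apply: good_conj; apply: good_A1.
- by apply: good_conj; apply: good_tr; [exact: Ce_sym | apply: good_A1].
- move=> B /(good_conj s^-1); rewrite conjK => /(canon_uniq cn) [] E.
    by left; rewrite -E conjKV.
  by right; rewrite -E conjKV.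
Qed.

Lemma typeA_conj n (N : 'M[int]_n.+1) : is_type_A N -> exists s, N = conj s (Ce false n.+1).
Proof.
by case=> _ [s Hs]; exists s; apply/matrixP => i j; rewrite mxE Hs CeA.
Qed.

Lemma typeAaff_conj n (N : 'M[int]_n.+1) : is_type_Aaff N ->
  (0 < n)%N /\ exists s, N = conj s (Ce true n.+1).
Proof.
case=> h [s Hs]; split; first lia.
by exists s; apply/matrixP => i j; rewrite mxE Hs CeAaff.
Qed.

Theorem lemma3p8 (r : nat) (N : 'M[int]_r) :
  (0 < r)%N -> is_gcm N -> indecomposable N ->
  [/\ (exists A : 'M[int]_r, good_Aprime N A) <-> (is_type_A N \/ is_type_Aaff N),
      ((r = 1%N /\ is_type_A N) \/ (r = 2%N /\ is_type_Aaff N) ->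
         exists A : 'M[int]_r, good_Aprime N A /\
           forall B : 'M[int]_r, good_Aprime N B -> B = A) &
      (((2 <= r)%N /\ is_type_A N) \/ ((3 <= r)%N /\ is_type_Aaff N) ->
         exists A1 A2 : 'M[int]_r,
           [/\ A1 != A2, good_Aprime N A1, good_Aprime N A2 &
               forall B : 'M[int]_r, good_Aprime N B -> B = A1 \/ B = A2])].
Proof.
case: r N => [//|n] N _ _ Hind; split.
- split; first by case=> A G; exact: forward_type G Hind.
  case=> [/typeA_conj [s Hs] | /typeAaff_conj [cn [s Hs]]].
    by case: (@canon_conj false n N s (fun f => match f with end) Hs) => G _ _; exists (conj s (A1 false n.+1)).
  by case: (@canon_conj true n N s (fun _ => cn) Hs) => G _ _; exists (conj s (A1 true n.+1)).
- case=> [[r1 /typeA_conj [s Hs]] | [r2 /typeAaff_conj [cn [s Hs]]]].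
    case: (@canon_conj false n N s (fun f => match f with end) Hs) => G _ U.
    exists (conj s (A1 false n.+1)); split => // B /U [] // ->.
    by rewrite -A1_eq //; left; lia.
  case: (@canon_conj true n N s (fun _ => cn) Hs) => G _ U.
  exists (conj s (A1 true n.+1)); split => // B /U [] // ->.
  by rewrite -A1_eq //; right; split => //; lia.
- case=> [[r2 /typeA_conj [s Hs]] | [r3 /typeAaff_conj [cn [s Hs]]]].
    case: (@canon_conj false n N s (fun f => match f with end) Hs) => G1 G2 U.
    exists (conj s (A1 false n.+1)), (conj s (A1 false n.+1)^T); split => //.
    apply: (contra_neq (@conj_inj _ s _ _)); apply: A1_neq => //; lia.
  case: (@canon_conj true n N s (fun _ => cn) Hs) => G1 G2 U.
  exists (conj s (A1 true n.+1)), (conj s (A1 true n.+1)^T); split => //.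
  apply: (contra_neq (@conj_inj _ s _ _)); apply: A1_neq; lia.
Qed.
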